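(* Fix $k\in[n]$ and vectors $\delta_i\in\mathbb{R}^n$ for $i\neq k$. Let $(W,P)$ be the stable point for the positions $M+\Delta_0$, where $\Delta_0e_i=\delta_i$ for $i\ne k$ and $\Delta_0e_k=0$, and let $(W',P')$ be the stable point for $M+\Delta_1$, where $\Delta_1e_i=\delta_i$ for $i\neq k$ and $\Delta_1e_k=\delta_k\in\mathbb{R}^n$. Let $\Gamma^{-1/2}\Sigma\Gamma^{-1/2}=V\Lambda V^T$ be an eigendecomposition with $V$ orthogonal and $\Lambda=\mathrm{diag}(\lambda_1,\dots,\lambda_n)$, $\lambda_i>0$. Define the symmetric matrix $A\in\mathbb{R}^{n\times n}$ by $$A_{ii}=\frac{V_{ki}^2}{4\lambda_i}+\sum_{\ell=1}^n\frac{V_{k\ell}^2}{2(\lambda_i+\lambda_\ell)},\qquad A_{ij}=\frac{V_{ki}V_{kj}}{2(\lambda_i+\lambda_j)}\ (i\neq j),$$ and $B=\gamma_k^{-1}\Gamma^{-1/2}VAV^T\Gamma^{-1/2}$. Then $W'e_k=We_k+B\delta_k$.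
   Context: Fix agents $[n]=\{1,\dots,n\}$. Let $\Sigma\in\mathbb{R}^{n\times n}$ be symmetric positive definite, $\Gamma=\mathrm{diag}(\gamma_1,\dots,\gamma_n)$ with all $\gamma_i>0$, and let $M\in\mathbb{R}^{n\times n}$ be the matrix of true beliefs. For a matrix of reported negotiating positions $M'\in\mathbb{R}^{n\times n}$, the stable point for $M'$ is the unique pair $(W,P)$ of real $n\times n$ matrices with $W=W^T$, $P^T=-P$ and $M'-P=2\Sigma W\Gamma$; equivalently $\mathrm{vec}(W)=\tfrac12(\Gamma\otimes\Sigma+\Sigma\otimes\Gamma)^{-1}\mathrm{vec}(M'+M'^T)$ and $P=M'-2\Sigma W\Gamma$. Here $\mathrm{vec}$ stacks columns and $e_i$ is the $i$-th standard basis vector. *)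

(* Defs.v *)
From HB Require Import structures.
From mathcomp Require Import all_boot all_order all_algebra.
Set Implicit Arguments. Unset Strict Implicit. Unset Printing Implicit Defensive.
Import Order.TTheory GRing.Theory Num.Theory.
Local Open Scope ring_scope.

Definition spd (R : realFieldType) (n : nat) (S : 'M[R]_n) : Prop :=
  S^T = S /\ forall x : 'cV[R]_n, x != 0 -> 0 < (x^T *m S *m x) 0 0.

Definition diagm (R : ringType) (n : nat) (g : 'I_n -> R) : 'M[R]_n :=
  diag_mx (\row_i g i).

Definition diag_invsqrt (R : rcfType) (n : nat) (g : 'I_n -> R) : 'M[R]_n :=
  diag_mx (\row_i (Num.sqrt (g i))^-1).

Definition stable_point (R : ringType) (n : nat) (Sigma Gamma M' W P : 'M[R]_n) : Prop :=
  W^T = W /\ P^T = - P /\ M' - P = 2%:R *: (Sigma *m W *m Gamma).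

Definition Delta0 (R : ringType) (n : nat) (k : 'I_n) (delta : 'I_n -> 'cV[R]_n) : 'M[R]_n :=
  \matrix_(a < n, i < n) (if i == k then 0 else delta i a ord0).

Definition Delta1 (R : ringType) (n : nat) (delta : 'I_n -> 'cV[R]_n) : 'M[R]_n :=
  \matrix_(a < n, i < n) delta i a ord0.

Definition Amat (R : fieldType) (n : nat) (k : 'I_n) (V : 'M[R]_n) (lam : 'I_n -> R) : 'M[R]_n :=
  \matrix_(i < n, j < n)
    (if i == j then
       V k i ^+ 2 / (4%:R * lam i) + \sum_(l < n) V k l ^+ 2 / (2%:R * (lam i + lam l))
     else V k i * V k j / (2%:R * (lam i + lam j))).

(* Main.v *)
Require Import Defs.
From HB Require Import structures.
From mathcomp Require Import all_boot all_order all_algebra.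
From mathcomp Require Import ring.
Import Order.TTheory GRing.Theory Num.Theory.
Local Open Scope ring_scope.

Lemma canc (R : pzRingType) (m n : nat) (A : 'M[R]_(m, n)) (B C : 'M[R]_n) :
  B *m C = 1%:M -> A *m B *m C = A.
Proof. by move=> h; rewrite -mulmxA h mulmx1. Qed.
Arguments canc {R m n} A {B C}.

Theorem mainTheorem2 (R : rcfType) (n : nat) (Sigma : 'M[R]_n) (gamma : 'I_n -> R)
  (M : 'M[R]_n) (k : 'I_n) (delta : 'I_n -> 'cV[R]_n)
  (W P W' P' : 'M[R]_n) (V : 'M[R]_n) (lam : 'I_n -> R) :
  spd Sigma ->
  (forall i, 0 < gamma i) ->
  stable_point Sigma (diagm gamma) (M + Delta0 k delta) W P ->
  stable_point Sigma (diagm gamma) (M + Delta1 delta) W' P' ->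
  V *m V^T = 1%:M ->
  (forall i, 0 < lam i) ->
  diag_invsqrt gamma *m Sigma *m diag_invsqrt gamma = V *m diagm lam *m V^T ->
  col k W' = col k W
    + ((gamma k)^-1 *: (diag_invsqrt gamma *m V *m Amat k V lam *m V^T *m diag_invsqrt gamma))
      *m delta k.
Proof.
move=> [St _] gpos [Wt [Pt EW]] [W't [P't EW']] VVt lpos HS.
have VtV : V^T *m V = 1%:M by apply: mulmx1C.
set Gi := diag_invsqrt gamma.
set G : 'M[R]_n := diag_mx (\row_i Num.sqrt (gamma i)).
set Ga := diagm gamma.
set L := diagm lam.
have sq i : Num.sqrt (gamma i) * (Num.sqrt (gamma i))^-1 = 1.
  by rewrite mulfV // gt_eqF // sqrtr_gt0.
have GGi : G *m Gi = 1%:M.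
  by rewrite /G /Gi /diag_invsqrt mulmx_diag; apply/matrixP=> i j; rewrite !mxE sq.
have GiG : Gi *m G = 1%:M by apply: mulmx1C.
have GG : G *m G = Ga.
  rewrite /G /Ga /diagm mulmx_diag; apply/matrixP=> i j; rewrite !mxE -expr2 sqr_sqrtr //.
  exact: ltW.
have Gt : G^T = G by rewrite tr_diag_mx.
have Git : Gi^T = Gi by rewrite tr_diag_mx.
have Gat : Ga^T = Ga by rewrite tr_diag_mx.
have Lt : L^T = L by rewrite tr_diag_mx.
have SE : Sigma = G *m V *m L *m V^T *m G.
  transitivity (G *m (Gi *m Sigma *m Gi) *m G).
    by rewrite !mulmxA GGi mul1mx -mulmxA GiG mulmx1.
  by rewrite HS !mulmxA.
set D := Delta1 delta - Delta0 k delta.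
have DE : D = delta k *m delta_mx 0 k.
  apply/matrixP=> a i; rewrite !mxE big_ord1 !mxE eqxx /=.
  by case: eqVneq => [->|_]; rewrite ?mulr1 ?mulr0 ?subr0 ?subrr.
set X := W' - W.
have Xt : X^T = X by rewrite /X linearB /= W't Wt.
set Q := P' - P.
have Qt : Q^T = - Q by rewrite /Q linearB /= P't Pt opprK opprB addrC.
have EX : D - Q = 2%:R *: (Sigma *m X *m Ga).
  rewrite /X mulmxBr mulmxBl scalerBr -EW -EW'.
  apply/matrixP=> i j; rewrite !mxE; ring.
have EXt : D^T + Q = 2%:R *: (Ga *m X *m Sigma).
  have := congr1 trmx EX; rewrite linearB /= Qt opprK linearZ /= !trmx_mul.
  by rewrite Gat Xt St mulmxA.
have Sum : D + D^T = 2%:R *: (Sigma *m X *m Ga + Ga *m X *m Sigma).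
  by rewrite scalerDr -EX -EXt addrACA addNr addr0.
set Z := V^T *m G *m X *m G *m V.
have XE : X = Gi *m V *m Z *m V^T *m Gi.
  by rewrite /Z !mulmxA (canc _ VVt) (canc _ GGi) (canc _ VVt) GiG mul1mx.
pose f (Y : 'M[R]_n) := V^T *m Gi *m Y *m Gi *m V.
have fD A B : f (A + B) = f A + f B by rewrite /f !mulmxDr !mulmxDl.
have fZ c A : f (c *: A) = c *: f A by rewrite /f -scalemxAr !scalemxAl.
have fT A : f (A^T) = (f A)^T by rewrite /f !trmx_mul !trmxK Git !mulmxA.
have K1 : f (Sigma *m X *m Ga) = L *m Z.
  rewrite /f SE -GG !mulmxA (canc _ GiG) VtV mul1mx (canc _ GGi).
  by [].
have K2 : f (Ga *m X *m Sigma) = Z *m L.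
  rewrite /f SE -GG !mulmxA (canc _ GiG) (canc _ GGi) (canc _ VtV).
  by [].
have FS : f (D + D^T) = 2%:R *: (L *m Z + Z *m L) by rewrite Sum fZ fD K1 K2.
set s := (Num.sqrt (gamma k))^-1.
have ss : s * s = (gamma k)^-1 by rewrite /s -invfM -expr2 sqr_sqrtr // ltW.
set a := V^T *m Gi *m delta k.
set b := col k V^T.
have hb j : b j ord0 = V k j by rewrite !mxE.
have Gie : Gi *m (delta_mx k 0 : 'cV[R]_n) = s *: delta_mx k 0.
  apply/matrixP => i j; rewrite /Gi /diag_invsqrt mul_diag_mx !mxE (ord1 j) eqxx.
  by case: (eqVneq i k) => [->|_]; rewrite ?andbT ?andbF ?mulr0 ?mulr1.
have Vb : V^T *m Gi *m (delta_mx k 0 : 'cV[R]_n) = s *: b by rewrite -mulmxA Gie -scalemxAr /b colE.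
have fDv : f D = s *: (a *m b^T).
  have e1 : (V^T *m Gi *m (delta_mx k 0 : 'cV[R]_n))^T = delta_mx 0 k *m Gi *m V.
    by rewrite !trmx_mul trmxK Git trmx_delta mulmxA.
  by rewrite /f DE -!mulmxA [delta_mx 0 k *m _]mulmxA -e1 Vb linearZ /= -!scalemxAr /a !mulmxA.
have aE : a = V^T *m Gi *m delta k by [].
have bE : b = V^T *m (delta_mx k 0 : 'cV[R]_n) by rewrite /b colE.
clearbody a b Z.
have Zent i j : Z i j = s * (a i ord0 * V k j + V k i * a j ord0) / (2%:R * (lam i + lam j)).
  have nz : 2%:R * (lam i + lam j) != 0 by rewrite mulf_neq0 ?pnatr_eq0 // gt_eqF // addr_gt0.
  apply: (canRL (mulfK nz)).
  have := congr1 (fun M : 'M[R]_n => M i j) FS.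
  rewrite /= fD fT fDv /L /diagm mul_diag_mx mul_mx_diag !mxE !big_ord1 !mxE !hb => h.
  transitivity (2%:R * (lam i * Z i j + Z i j * lam j)); first by ring.
  by rewrite -h; ring.
have ZB : Z *m b = s *: (Amat k V lam *m a).
  apply/matrixP=> i j; rewrite (ord1 j) !mxE.
  under eq_bigr => l _ do rewrite hb Zent.
  under [in RHS]eq_bigr => l _ do rewrite !mxE.
  have nz l : 2%:R * (lam i + lam l) != 0 by rewrite mulf_neq0 ?pnatr_eq0 // gt_eqF // addr_gt0.
  rewrite (eq_bigr (fun l => s * a i ord0 * (V k l ^+ 2 / (2%:R * (lam i + lam l)))
     + s * (V k i * V k l * a l ord0 / (2%:R * (lam i + lam l))))); last first.
    by move=> l _; field; rewrite gt_eqF // addr_gt0.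
  rewrite big_split /= -!mulr_sumr (bigD1 i) //= [in RHS](bigD1 i) //= eqxx.
  rewrite [X in _ = _ * (_ + X)](eq_bigr (fun l => V k i * V k l * a l ord0 / (2%:R * (lam i + lam l)))); last first.
    by move=> l hl; rewrite eq_sym (negbTE hl) mulrAC.
  rewrite [\sum_(i0 < n) _](bigD1 i) //=.
  have l0 : lam i != 0 by rewrite gt_eqF.
  by field; rewrite ?l0 ?gt_eqF ?addr_gt0.
have CX : col k X = s *: (Gi *m V *m (Z *m b)).
  by rewrite colE XE -!mulmxA Gie -!scalemxAr bE.
have CX2 : col k X = col k W' - col k W by rewrite !colE mulmxBl.
rewrite -scalemxAl -!mulmxA (mulmxA V^T) -aE.
have -> : col k W' = col k W + col k X by rewrite CX2 addrC subrK.
by rewrite CX ZB -mulmxA -!scalemxAr scalerA ss.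
Qed.
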